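(* Let $\Sigma\in\mathbb{R}^{n\times n}$ be a symmetric positive definite matrix with eigenvalues $\lambda_1,\ldots,\lambda_n$ and condition number $\kappa=\lambda_{\max}/\lambda_{\min}$, where $\lambda_{\max}=\max_i\lambda_i$, $\lambda_{\min}=\min_i\lambda_i$. For $0<D\le\mathrm{tr}(\Sigma)$ let $L>0$ satisfy $\sum_{i=1}^n\min\{L,\lambda_i\}=D$, $D_i=\min\{L,\lambda_i\}$, and $R(D)=\sum_{i=1}^n\frac12\log\frac{\lambda_i}{D_i}$. For $\alpha\in[0,1]$, $D>0$ let $R_\alpha(D)=\frac12\log\det\big(\alpha I+\frac{n}{D}\Sigma\big)$, and let $\alpha^*\in[0,1]$ be the unique value with $R_{\alpha^*}(\mathrm{tr}(\Sigma))=0$. Then for every $D\in(0,\mathrm{tr}(\Sigma)]$, $$\frac12\log\frac1\kappa\le\frac{R_{\alpha^*}(D)-R(D)}{n}\le\frac12\log\Big(2-\frac1\kappa\Big).$$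
   Context: $\log$ denotes the logarithm to a fixed base greater than $1$. $R(D)$ is the mean-square-distortion rate-distortion function of an $n$-dimensional Gaussian vector with covariance $\Sigma$ (reverse water-filling); $I$ is the $n\times n$ identity matrix. *)

(* Defs.v *)
From HB Require Import structures.
From mathcomp Require Import all_boot all_order all_algebra.
From mathcomp Require Import all_classical all_reals all_analysis.
Set Implicit Arguments. Unset Strict Implicit. Unset Printing Implicit Defensive.
Import Order.TTheory GRing.Theory Num.Theory.
Local Open Scope ring_scope.

Section Defs.
Variable R : realType.

Definition logb (b x : R) : R := ln x / ln b.

Definition symmetric_mx n (S : 'M[R]_n) : Prop := S^T = S.

Definition posdef_mx n (S : 'M[R]_n) : Prop :=
  forall x : 'rV[R]_n, x != 0 -> 0 < (x *m S *m x^T) 0 0.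

(* lam lists the eigenvalues of S with multiplicity
   (roots of the characteristic polynomial) *)
Definition eigenvalues_of n (S : 'M[R]_n) (lam : 'I_n -> R) : Prop :=
  char_poly S = \prod_(i < n) ('X - (lam i)%:P).

Definition lam_max n (lam : 'I_n -> R) : R := \big[Num.max/0]_(i < n) lam i.
Definition lam_min n (lam : 'I_n -> R) : R :=
  \big[Num.min/lam_max lam]_(i < n) lam i.
Definition cond_number n (lam : 'I_n -> R) : R := lam_max lam / lam_min lam.

(* reverse water-filling rate-distortion function, given the water level L *)
Definition RD_wf (b : R) n (lam : 'I_n -> R) (L : R) : R :=
  \sum_(i < n) (1/2) * logb b (lam i / Num.min L (lam i)).

Definition R_alpha (b : R) n (S : 'M[R]_n) (alpha D : R) : R :=
  (1/2) * logb b (\det (alpha%:M + (n%:R / D) *: S)).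

End Defs.

(* Main.v *)
Require Import Defs.
From HB Require Import structures.
From mathcomp Require Import all_boot all_order all_algebra.
From mathcomp Require Import all_classical all_reals all_analysis.
From mathcomp Require Import ring lra.
Import Order.TTheory GRing.Theory Num.Theory.
Local Open Scope ring_scope.

Section H.
Variable R : realType.

Lemma char_poly_horner n (A : 'M[R]_n) x : (char_poly A).[x] = \det (x%:M - A).
Proof.
rewrite /char_poly -horner_evalE -det_map_mx; congr (determinant _).
apply/matrixP => i j; rewrite !mxE /= horner_evalE hornerD hornerN hornerMn hornerX hornerC.
by []. Qed.


Lemma eig_pos n (S : 'M[R]_n) lam : posdef_mx S -> eigenvalues_of S lam ->
  forall i, 0 < lam i.
Proof.
move=> pd E i.
have: eigenvalue S (lam i).
  rewrite eigenvalue_root_char E; apply/rootP.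
  rewrite horner_prod (bigD1 i) //= !hornerE subrr mul0r //.
case/eigenvalueP => v vS v0.
have := pd v v0; rewrite vS -scalemxAl mxE.
have h : 0 <= (v *m v^T) 0 0.
  rewrite mxE; apply: sumr_ge0 => k _; rewrite mxE; exact: sqr_ge0.
case: (ltP 0 (lam i)) => // le.
by move=> /lt_le_trans/(_ (mulr_le0_ge0 le h)); rewrite ltxx.
Qed.

Lemma det_shift n (S : 'M[R]_n) lam (a c : R) : eigenvalues_of S lam -> c != 0 ->
  \det (a%:M + c *: S) = \prod_(i < n) (a + c * lam i).
Proof.
move=> E c0.
have -> : a%:M + c *: S = (- c) *: ((- a / c)%:M - S).
  rewrite scalerBr !scaleNr opprK; congr (_ + _).
  rewrite scale_scalar_mx -(raddfN (@scalar_mx R n)); congr (_%:M); by field.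
rewrite detZ -char_poly_horner E horner_prod -[X in (- c) ^+ X]card_ord -prodr_const.
rewrite -big_split /=; apply: eq_bigr => i _; rewrite !hornerE; by field.
Qed.

Lemma trace_eig n (S : 'M[R]_n) lam : (0 < n)%N -> eigenvalues_of S lam ->
  \tr S = \sum_(i < n) lam i.
Proof.
move=> n0 E.
have := char_poly_trace S n0; rewrite E.
have -> : \prod_(i < n) ('X - (lam i)%:P) = \prod_(p <- map lam (enum 'I_n)) ('X - p%:P).
  by rewrite big_map big_enum.
have sz : size (map lam (enum 'I_n)) = n by rewrite size_map size_enum_ord.
rewrite -[X in _`_X.-1]sz coefPn_prod_XsubC ?sz -?lt0n // => /oppr_inj <-.
by rewrite big_map big_enum.
Qed.

Lemma ln_prod n (f : 'I_n -> R) : (forall i, 0 < f i) ->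
  ln (\prod_(i < n) f i) = \sum_(i < n) ln (f i).
Proof.
elim: n f => [|n IH] f fp; first by rewrite !big_ord0 ln1.
rewrite !big_ord_recr /= lnM ?IH // posrE ?fp //.
exact: prodr_gt0.
Qed.

Lemma lmax_ge n (lam : 'I_n -> R) i : lam i <= lam_max lam.
Proof. by rewrite /lam_max (bigD1 i) //= le_max lexx. Qed.

Lemma lmin_le n (lam : 'I_n -> R) i : lam_min lam <= lam i.
Proof. by rewrite /lam_min (bigD1 i) //= ge_min lexx. Qed.

Lemma lmin_gt0 n (lam : 'I_n -> R) : (0 < n)%N -> (forall i, 0 < lam i) ->
  0 < lam_min lam.
Proof.
move=> n0 lp; apply: (big_ind (fun x => 0 < x)).
- by apply: (lt_le_trans (lp (Ordinal n0))); apply: lmax_ge.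
- by move=> x y x0 y0; rewrite lt_min x0 y0.
- by move=> i _; exact: lp.
Qed.

Lemma prod_gt1 n (f : 'I_n -> R) : (0 < n)%N -> (forall i, 1 < f i) ->
  1 < \prod_(i < n) f i.
Proof.
case: n f => // n f _ f1.
rewrite big_ord_recr /=.
have h : \prod_(i < n) (1:R) <= \prod_(i < n) f (widen_ord (leqnSn n) i).
  by apply: ler_prod => i _; rewrite ler01 ltW.
rewrite big1_eq in h.
apply: (lt_le_trans (f1 ord_max)).
apply: ler_peMl => //.
exact: le_trans ler01 (ltW (f1 ord_max)).
Qed.
End H.

Theorem corollary1 (R : realType) (b : R) (n : nat) (S : 'M[R]_n)
    (lam : 'I_n -> R) (alpha_star D L : R) :
  1 < b -> (0 < n)%N ->
  symmetric_mx S -> posdef_mx S -> eigenvalues_of S lam ->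
  0 <= alpha_star <= 1 -> R_alpha b S alpha_star (\tr S) = 0 ->
  0 < D -> D <= \tr S ->
  0 < L -> \sum_(i < n) Num.min L (lam i) = D ->
  (1/2) * logb b (1 / cond_number lam)
    <= (R_alpha b S alpha_star D - RD_wf b lam L) / n%:R
  /\ (R_alpha b S alpha_star D - RD_wf b lam L) / n%:R
    <= (1/2) * logb b (2 - 1 / cond_number lam).
Proof.
move=> hb n0 _ pd E /andP[a0 a1] Ra D0 DT L0 SD.
have lp := @eig_pos R _ _ _ pd E.
have Tr := @trace_eig R _ _ _ n0 E.
have lmaxge := @lmax_ge R n lam.
have lminle := @lmin_le R n lam.
have lmin0 := @lmin_gt0 R _ _ n0 lp.
set lmax := lam_max lam in lmaxge lmin0 lminle *.
set lmin := lam_min lam in lmaxge lmin0 lminle *.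
have lmax0 : 0 < lmax := lt_le_trans lmin0 (le_trans (lminle (Ordinal n0)) (lmaxge _)).
have lminmax : lmin <= lmax := le_trans (lminle (Ordinal n0)) (lmaxge _).
set T := \tr S in Ra DT Tr *.
have Tle : T <= n%:R * lmax.
  rewrite Tr -[X in X%:R * _]card_ord mulr_natl -sumr_const.
  by apply: ler_sum => i _; exact: lmaxge.
have T0 : 0 < T := lt_le_trans D0 DT.
have nR : 0 < n%:R :> R by rewrite ltr0n.
have lb : 0 < ln b := ln_gt0 hb.
have kinv : 1 / cond_number lam = lmin / lmax by rewrite /cond_number div1r invf_div.
rewrite kinv.
set a := alpha_star in a0 a1 Ra *.
have cT0 : 0 < n%:R / T by rewrite divr_gt0.
have fpos : forall i, 0 < a + n%:R / T * lam i.
  by move=> i; apply: ltr_wpDl => //; rewrite mulr_gt0.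
have prod1 : \prod_(i < n) (a + n%:R / T * lam i) = 1.
  move: Ra; rewrite /R_alpha /logb (@det_shift R _ _ _ _ _ E); last by rewrite gt_eqF.
  move=> Ra.
  have P0 : 0 < \prod_(i < n) (a + n%:R / T * lam i) by apply: prodr_gt0.
  apply/eqP; rewrite -ln_eq0 //; apply/eqP.
  set P := ln _ in Ra *.
  have -> : P = 2 * ln b * (1 / 2 * (P / ln b)) by field; rewrite gt_eqF.
  by rewrite Ra mulr0.
have aub : a <= 1 - lmin / lmax.
  rewrite leNgt; apply/negP => H.
  have f1 : forall i, 1 < a + n%:R / T * lam i.
    move=> i; have h1 : lmin / lmax <= n%:R / T * lam i.
      rewrite -subr_ge0.
      have -> : n%:R / T * lam i - lmin / lmax
        = (n%:R * lmax * (lam i - lmin) + lmin * (n%:R * lmax - T)) / (T * lmax).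
        by field; rewrite !gt_eqF.
      apply: divr_ge0; last by rewrite mulr_ge0 // ltW.
      apply: addr_ge0; apply: mulr_ge0; rewrite ?subr_ge0 //.
      - by rewrite mulr_ge0 // ltW.
      - exact: ltW.
    lra.
  by have := @prod_gt1 R _ _ n0 f1; rewrite prod1 ltxx.
set c := n%:R / D.
have c0 : 0 < c by rewrite divr_gt0.
pose m i := Num.min L (lam i).
have m0 : forall i, 0 < m i by move=> i; rewrite lt_min L0 lp.
have mL : forall i, m i <= L by move=> i; rewrite ge_min lexx.
have ml : forall i, m i <= lam i by move=> i; rewrite ge_min lexx orbT.
have mcase : forall i, m i = L \/ m i = lam i.
  move=> i; case: (leP L (lam i)) => h; [left|right]; rewrite /m.
    exact: min_l.
  by apply: min_r; exact: ltW.
have gpos : forall i, 0 < a + c * lam i.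
  by move=> i; apply: ltr_wpDl => //; rewrite mulr_gt0.
pose y i := (a + c * lam i) / (lam i / m i).
have ypos : forall i, 0 < y i by move=> i; rewrite divr_gt0 // divr_gt0.
have key : R_alpha b S a D - RD_wf b lam L = (\sum_(i < n) ln (y i)) / (2 * ln b).
  rewrite /R_alpha /RD_wf /logb (@det_shift R _ _ _ _ _ E); last by rewrite gt_eqF.
  rewrite ln_prod //.
  have -> : \sum_(i < n) ln (y i) = \sum_(i < n) ln (a + c * lam i) - \sum_(i < n) ln (lam i / m i).
    rewrite -sumrB; apply: eq_bigr => i _; rewrite ln_div // posrE ?divr_gt0 //.
  rewrite -mulr_sumr -mulr_suml; field; rewrite gt_eqF //.
rewrite key.
set K := \sum_(i < n) ln (y i).
have yE : forall i, y i = a * (m i / lam i) + c * m i.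
  by move=> i; rewrite /y; field; rewrite !gt_eqF.
have mlam1 : forall i, m i / lam i <= 1 by move=> i; rewrite ler_pdivrMr // mul1r.
have DnL : D <= n%:R * L.
  rewrite -SD -[X in X%:R * _]card_ord mulr_natl -sumr_const.
  by apply: ler_sum => i _; exact: mL.
have lower : n%:R * ln (lmin / lmax) <= K.
  rewrite mulr_natl -[X in _ *+ X]card_ord -sumr_const.
  apply: ler_sum => i _; rewrite ler_ln ?posrE ?divr_gt0 //.
  rewrite yE -subr_ge0.
  have -> : a * (m i / lam i) + c * m i - lmin / lmax
    = a * (m i / lam i) + (n%:R * m i * lmax - lmin * D) / (D * lmax).
    by rewrite /c; field; rewrite !gt_eqF.
  apply: addr_ge0; first by rewrite mulr_ge0 // ltW // divr_gt0.
  apply: divr_ge0; last by rewrite mulr_ge0 // ltW.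
  rewrite subr_ge0.
  case: (mcase i) => ->.
  - have h1 : lmin * D <= lmin * (n%:R * L) by rewrite ler_wpM2l // ltW.
    have h2 : lmin * (n%:R * L) <= lmax * (n%:R * L).
      by rewrite ler_wpM2r // mulr_ge0 // ltW.
    lra.
  - have h1 : lmin * D <= lmin * (n%:R * lmax).
      by rewrite ler_wpM2l ?(le_trans DT) // ltW.
    have h2 : lmin * (n%:R * lmax) <= lam i * (n%:R * lmax).
      by rewrite ler_wpM2r // mulr_ge0 // ltW.
    lra.
set C := 2 - lmin / lmax.
have C1 : 1 <= C.
  have : lmin / lmax <= 1 by rewrite ler_pdivrMr // mul1r.
  rewrite /C; lra.
have C0 : 0 < C := lt_le_trans ltr01 C1.
have upper : K <= n%:R * ln C.
  have h : K <= \sum_(i < n) ((ln C + a / C - 1) + (c / C) * m i).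
    apply: ler_sum => i _.
    have yC : 0 < y i / C by rewrite divr_gt0.
    have e : ln (y i) = ln C + ln (y i / C).
      by rewrite -lnM ?posrE // mulrC divfK // gt_eqF.
    have l1 : ln (y i / C) <= y i / C - 1.
      have := @le_ln1Dx R (y i / C - 1); rewrite [1 + _]addrC subrK; apply; lra.
    have l2 : y i <= a + c * m i.
      rewrite yE lerD2r; apply: ler_piMr => //.
    have l3 : y i / C <= (a + c * m i) / C by rewrite ler_pM2r // invr_gt0.
    have -> : ln C + a / C - 1 + c / C * m i = ln C + (a + c * m i) / C - 1.
      by field; rewrite gt_eqF.
    lra.
  move: h; rewrite big_split /= sumr_const card_ord -mulr_sumr.
  rewrite (_ : \sum_(i < n) m i = D) //.
  have -> : (ln C + a / C - 1) *+ n + c / C * D = n%:R * ln C + n%:R * (a + 1 - C) / C.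
    by rewrite -mulr_natl /c; field; rewrite !gt_eqF.
  have : n%:R * (a + 1 - C) / C <= 0.
    rewrite -mulrA pmulr_rle0 // pmulr_lle0 ?invr_gt0 //.
    rewrite /C; lra.
  lra.
split; rewrite /logb -subr_ge0.
- have -> : K / (2 * ln b) / n%:R - 1 / 2 * (ln (lmin / lmax) / ln b)
    = (K - n%:R * ln (lmin / lmax)) / (2 * ln b * n%:R).
    by field; rewrite !gt_eqF.
  by apply: divr_ge0; rewrite ?subr_ge0 // ?mulr_ge0 // ltW.
- have -> : 1 / 2 * (ln C / ln b) - K / (2 * ln b) / n%:R
    = (n%:R * ln C - K) / (2 * ln b * n%:R).
    by field; rewrite !gt_eqF.
  by apply: divr_ge0; rewrite ?subr_ge0 // ?mulr_ge0 // ltW.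
Qed.
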